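(* Let f1 and f2 be two point agents in the plane, each moving with a constant nonzero velocity, such that their straight-line trajectories are not parallel and hence intersect in a single point $P$. Let $t_1$ and $t_2$ be the times at which f1 and f2 respectively pass through $P$, and suppose $t_1>t_2$ (f1 reaches the intersection after f2). Then: (i) as observed by f1, agent f2 is in regressive motion at all times $t<t_2$ and in progressive motion at all times $t>t_2$; (ii) as observed by f2, agent f1 is in progressive motion at all times $t<t_1$ and in regressive motion at all times $t>t_1$.
   Context: Each agent is a point (center of projection) with a heading equal to the direction of its velocity. For an observer agent A and an observed agent B, let $\phi_{BA}(t)\in[-\pi,\pi)$ be the azimuthal position of B as seen from A, measured relative to A's heading: $\phi=0$ is straight ahead of A, positive angles are to A's left (counterclockwise) and negative angles to A's right. Let $\dot\phi_{BA}$ be its time derivative. B is said to be in regressive motion with respect to A at time $t$ if $\dot\phi_{BA}(t)\cdot\phi_{BA}(t)\le 0$, and in progressive motion otherwise. *)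

(* Defs.v *)
From Stdlib Require Import Reals Lra.
Open Scope R_scope.

Definition vec := (R * R)%type.
Definition vadd (a b : vec) : vec := (fst a + fst b, snd a + snd b).
Definition vsub (a b : vec) : vec := (fst a - fst b, snd a - snd b).
Definition vscale (k : R) (a : vec) : vec := (k * fst a, k * snd a).
Definition dot (a b : vec) : R := fst a * fst b + snd a * snd b.
Definition cross (a b : vec) : R := fst a * snd b - snd a * fst b.

(* Two-argument arctangent with values in [-PI, PI):
   the polar angle of the nonzero vector (x, y); on the negative x-axis the
   value is -PI (so that the range is [-PI, PI)). Value 0 at the origin
   (irrelevant: never used at the origin). *)
Definition atan2 (y x : R) : R :=
  if Rlt_dec 0 x then atan (y / x)
  else if Rlt_dec x 0 then
    (if Rlt_dec 0 y then atan (y / x) + PI else atan (y / x) - PI)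
  else if Rlt_dec 0 y then PI / 2
  else if Rlt_dec y 0 then - (PI / 2)
  else 0.

Definition traj (a v : vec) (t : R) : vec := vadd a (vscale t v).

(* Azimuth phi_{BA}(t) in [-PI,PI) of agent B (a_B, v_B) as seen from agent A
   (a_A, v_A), relative to A's heading (the direction of v_A); positive =
   counterclockwise (to A's left).  The relative position d = p_B - p_A,
   expressed in A's frame (first axis along v_A, second axis v_A rotated by
   +90 degrees), has coordinates (dot v_A d, cross v_A d) up to the positive
   factor |v_A|. *)
Definition azimuth (aA vA aB vB : vec) (t : R) : R :=
  let d := vsub (traj aB vB t) (traj aA vA t) in
  atan2 (cross vA d) (dot vA d).

Definition regressive (aA vA aB vB : vec) (t : R) : Prop :=
  exists l, derivable_pt_lim (azimuth aA vA aB vB) t l /\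
            l * azimuth aA vA aB vB t <= 0.
Definition progressive (aA vA aB vB : vec) (t : R) : Prop :=
  exists l, derivable_pt_lim (azimuth aA vA aB vB) t l /\
            l * azimuth aA vA aB vB t > 0.

(* Main.v *)
Require Import Defs.
From Stdlib Require Import Reals Lra FunctionalExtensionality.
From Coquelicot Require Import Coquelicot.
Open Scope R_scope.

Lemma atan2_pos y x : 0 < y -> atan2 y x = PI/2 - atan (x/y).
Proof.
  intros Hy. unfold atan2.
  destruct (Rlt_dec 0 x) as [Hx|Hx].
  { replace (y/x) with (/ (x/y)) by (field; lra).
    apply atan_inv. apply Rdiv_lt_0_compat; lra. }
  destruct (Rlt_dec x 0) as [Hx'|Hx'].
  { destruct (Rlt_dec 0 y); [|lra].
    replace (y/x) with (- / (-x/y)) by (field; lra).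
    rewrite atan_opp, atan_inv.
    replace (-x/y) with (-(x/y)) by (field; lra). rewrite atan_opp. lra.
    apply Rdiv_lt_0_compat; lra. }
  assert (x = 0) by lra. subst. destruct (Rlt_dec 0 y); [|lra].
  replace (0/y) with 0 by (field; lra). rewrite atan_0. lra.
Qed.

Lemma atan2_neg y x : y < 0 -> atan2 y x = - (PI/2) - atan (x/y).
Proof.
  intros Hy. unfold atan2.
  destruct (Rlt_dec 0 x) as [Hx|Hx].
  { replace (y/x) with (- / (-(x/y))) by (field; lra).
    rewrite atan_opp, atan_inv, atan_opp. lra.
    replace (-(x/y)) with (x/(-y)) by (field; lra). apply Rdiv_lt_0_compat; lra. }
  destruct (Rlt_dec x 0) as [Hx'|Hx'].
  { destruct (Rlt_dec 0 y); [lra|].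
    replace (y/x) with (/ (x/y)) by (field; lra).
    rewrite atan_inv. lra.
    replace (x/y) with ((-x)/(-y)) by (field; lra). apply Rdiv_lt_0_compat; lra. }
  assert (x = 0) by lra. subst. destruct (Rlt_dec 0 y); [lra|].
  destruct (Rlt_dec y 0); [|lra].
  replace (0/y) with 0 by (field; lra). rewrite atan_0. lra.
Qed.

Lemma atan2_sign y x : (0 < y -> 0 < atan2 y x) /\ (y < 0 -> atan2 y x < 0).
Proof.
  split; intros Hy.
  - rewrite atan2_pos by lra. pose proof (atan_bound (x/y)). lra.
  - rewrite atan2_neg by lra. pose proof (atan_bound (x/y)). lra.
Qed.

Lemma loc_sign (y0 y1 t : R) (sg : R) : 0 < sg * (y0 + t*y1) ->
  locally t (fun s => 0 < sg * (y0 + s*y1)).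
Proof.
  intros H.
  assert (Hp : 0 < sg * (y0 + t*y1) / (Rabs (sg*y1) + 1)).
  { apply Rdiv_lt_0_compat; [lra|]. pose proof (Rabs_pos (sg*y1)); lra. }
  exists (mkposreal _ Hp). intros s Hs.
  change (Rabs (s - t) < sg * (y0 + t*y1) / (Rabs (sg*y1) + 1)) in Hs.
  assert (Habs: Rabs ((s - t) * (sg*y1)) < sg * (y0 + t*y1)).
  { rewrite Rabs_mult. pose proof (Rabs_pos (sg*y1)). pose proof (Rabs_pos (s-t)).
    apply Rmult_lt_compat_r with (r := Rabs (sg*y1) + 1) in Hs; [|lra].
    unfold Rdiv in Hs. rewrite Rmult_assoc, Rinv_l in Hs by lra. nra. }
  pose proof (Rle_abs (-((s - t) * (sg*y1)))). rewrite Rabs_Ropp in H0. nra.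
Qed.

Lemma key (x0 x1 y0 y1 t : R) : y0 + t*y1 <> 0 ->
  derivable_pt_lim (fun s => atan2 (y0+s*y1) (x0+s*x1)) t
    (((x0+t*x1)*y1 - (y0+t*y1)*x1)/((x0+t*x1)^2+(y0+t*y1)^2)).
Proof.
  intros Hy. apply is_derive_Reals.
  destruct (Rlt_dec 0 (y0+t*y1)) as [Hp|Hn].
  - apply (is_derive_ext_loc (fun s => PI/2 - atan ((x0+s*x1)/(y0+s*y1)))).
    { assert (H := loc_sign y0 y1 t 1 ltac:(lra)).
      destruct H as [e He]. exists e. intros s Hs. specialize (He s Hs).
      rewrite atan2_pos; lra. }
    auto_derive. lra. field. split; [apply Rgt_not_eq; simpl; rewrite !Rmult_1_r; pose proof (Rle_0_sqr (x0+t*x1)); pose proof (Rlt_0_sqr (y0+t*y1) Hy); unfold Rsqr in *; lra|lra].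
  - assert (Hn' : y0 + t*y1 < 0) by lra.
    apply (is_derive_ext_loc (fun s => - (PI/2) - atan ((x0+s*x1)/(y0+s*y1)))).
    { assert (H := loc_sign y0 y1 t (-1) ltac:(lra)).
      destruct H as [e He]. exists e. intros s Hs. specialize (He s Hs).
      rewrite atan2_neg; lra. }
    auto_derive. lra. field. split; [apply Rgt_not_eq; simpl; rewrite !Rmult_1_r; pose proof (Rle_0_sqr (x0+t*x1)); pose proof (Rlt_0_sqr (y0+t*y1) Hy); unfold Rsqr in *; lra|lra].
Qed.

Lemma sign_of (x0 x1 y0 y1 t : R) :
  let X := x0+t*x1 in let Y := y0+t*y1 in
  let F := fun s => atan2 (y0+s*y1) (x0+s*x1) in
  ((X*y1 - Y*x1)*Y < 0 -> exists l, derivable_pt_lim F t l /\ l * F t <= 0) /\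
  ((X*y1 - Y*x1)*Y > 0 -> exists l, derivable_pt_lim F t l /\ l * F t > 0).
Proof.
  intros X Y F.
  assert (G : Y <> 0 -> exists l, derivable_pt_lim F t l /\
     l = (X*y1 - Y*x1) / (X^2+Y^2) /\ 0 < X^2 + Y^2).
  { intros HY. exists ((X*y1 - Y*x1) / (X^2+Y^2)). split; [apply key; auto|split; auto].
    simpl. rewrite !Rmult_1_r. pose proof (Rle_0_sqr X). pose proof (Rlt_0_sqr Y HY).
    unfold Rsqr in *; lra. }
  pose proof (atan2_sign Y X) as [Sp Sn].
  change (F t) with (atan2 Y X).
  split; intros H.
  - assert (HY : Y <> 0) by (intro E; rewrite E in H; lra).
    destruct (G HY) as [l [Hl [El HD]]]. exists l; split; auto.
    rewrite El. set (N := X*y1 - Y*x1) in *. unfold Rdiv.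
    assert (0 < / (X^2+Y^2)) by (apply Rinv_0_lt_compat; lra).
    destruct (Rlt_dec 0 Y).
    + specialize (Sp r). assert (N < 0) by nra. apply Rlt_le.
      assert (N * / (X^2+Y^2) < 0) by nra. nra.
    + assert (Y < 0) by lra. specialize (Sn H1). assert (N > 0) by nra. apply Rlt_le.
      assert (N * / (X^2+Y^2) > 0) by nra. nra.
  - assert (HY : Y <> 0) by (intro E; rewrite E in H; lra).
    destruct (G HY) as [l [Hl [El HD]]]. exists l; split; auto.
    rewrite El. set (N := X*y1 - Y*x1) in *. unfold Rdiv.
    assert (0 < / (X^2+Y^2)) by (apply Rinv_0_lt_compat; lra).
    destruct (Rlt_dec 0 Y).
    + specialize (Sp r). assert (N > 0) by nra.
      assert (N * / (X^2+Y^2) > 0) by nra. nra.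
    + assert (Y < 0) by lra. specialize (Sn H1). assert (N < 0) by nra.
      assert (N * / (X^2+Y^2) < 0) by nra. nra.
Qed.

Lemma azimuth_eq aA vA aB vB : azimuth aA vA aB vB =
  fun s => atan2 (cross vA (vsub aB aA) + s * cross vA (vsub vB vA))
                 (dot vA (vsub aB aA) + s * dot vA (vsub vB vA)).
Proof.
  apply functional_extensionality; intro s. unfold azimuth.
  f_equal; unfold cross, dot, vsub, traj, vadd, vscale; simpl; ring.
Qed.

Theorem theorem3 (a1 v1 a2 v2 P : vec) (t1 t2 : R) :
  v1 <> (0, 0) -> v2 <> (0, 0) ->
  cross v1 v2 <> 0 ->
  traj a1 v1 t1 = P -> traj a2 v2 t2 = P ->
  t1 > t2 ->
  (forall t, t < t2 -> regressive a1 v1 a2 v2 t) /\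
  (forall t, t > t2 -> progressive a1 v1 a2 v2 t) /\
  (forall t, t < t1 -> progressive a2 v2 a1 v1 t) /\
  (forall t, t > t1 -> regressive a2 v2 a1 v1 t).
Proof.
  intros _ _ Hc E1 E2 Ht.
  destruct a1 as [a11 a12], v1 as [v11 v12], a2 as [a21 a22], v2 as [v21 v22].
  unfold traj, vadd, vscale in E1, E2; simpl in E1, E2. subst P.
  injection E2 as E21 E22.
  assert (a21 = a11 + t1*v11 - t2*v21) by lra.
  assert (a22 = a12 + t1*v12 - t2*v22) by lra. subst a21 a22. clear E21 E22.
  unfold cross in Hc; simpl in Hc.
  set (c := v11*v22 - v12*v21) in *.
  assert (Hc2 : 0 < c*c) by (apply Rlt_0_sqr in Hc; exact Hc).
  assert (Hn1 : 0 < v11*v11 + v12*v12).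
  { destruct (Req_dec v11 0); destruct (Req_dec v12 0); try nra.
    exfalso; apply Hc; unfold c; subst; ring. }
  assert (Hn2 : 0 < v21*v21 + v22*v22).
  { destruct (Req_dec v21 0); destruct (Req_dec v22 0); try nra.
    exfalso; apply Hc; unfold c; subst; ring. }
  unfold regressive, progressive; rewrite !azimuth_eq.
  repeat split; intros t Hlt;
    match goal with
    | |- exists l, derivable_pt_lim (fun s => atan2 (?y0 + s * ?y1) (?x0 + s * ?x1)) t l /\ _ <= 0 =>
        apply (proj1 (sign_of x0 x1 y0 y1 t))
    | |- exists l, derivable_pt_lim (fun s => atan2 (?y0 + s * ?y1) (?x0 + s * ?x1)) t l /\ _ > 0 =>
        apply (proj2 (sign_of x0 x1 y0 y1 t))
    end;
    unfold cross, dot, vsub; simpl.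
  - replace (_ * _) with ((c*c) * (v11*v11+v12*v12) * ((t1-t2)*(t-t2))) by (unfold c; ring).
    assert ((t1-t2)*(t-t2) < 0) by nra. assert (0 < c*c*(v11*v11+v12*v12)) by (apply Rmult_lt_0_compat; lra). nra.
  - replace (_ * _) with ((c*c) * (v11*v11+v12*v12) * ((t1-t2)*(t-t2))) by (unfold c; ring).
    assert ((t1-t2)*(t-t2) > 0) by nra. assert (0 < c*c*(v11*v11+v12*v12)) by (apply Rmult_lt_0_compat; lra). nra.
  - replace (_ * _) with (- ((c*c) * (v21*v21+v22*v22) * ((t1-t2)*(t-t1)))) by (unfold c; ring).
    assert ((t1-t2)*(t-t1) < 0) by nra. assert (0 < c*c*(v21*v21+v22*v22)) by (apply Rmult_lt_0_compat; lra). nra.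
  - replace (_ * _) with (- ((c*c) * (v21*v21+v22*v22) * ((t1-t2)*(t-t1)))) by (unfold c; ring).
    assert ((t1-t2)*(t-t1) > 0) by nra. assert (0 < c*c*(v21*v21+v22*v22)) by (apply Rmult_lt_0_compat; lra). nra.
Qed.
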